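(* Let $G=(V,E)$ be a symmetric caterpillar with $n\ge 1$ spine vertices $s_1,\dots,s_n$, where $L_i$ denotes the number of leaves attached to $s_i$, and let $L=\max_{1\le i\le n}L_i$. Then $IDI(G)=L$ if $L\ge 2$, and $IDI(G)=2$ if $L=1$.
   Context: A caterpillar is a tree consisting of a path (the spine) $s_1,s_2,\dots,s_n$ together with leaves each attached to a spine vertex; $L_i\ge 0$ is the number of leaves attached to $s_i$, and $L_1,L_n\ge 1$ (a spine vertex is exactly a vertex of degree at least two, except that when $n=1$ the caterpillar is the star $K_{1,L_1}$). The caterpillar is symmetric if $L_j=L_{n+1-j}$ for all $1\le j\le\lfloor n/2\rfloor$. For a finite simple connected graph $G=(V,E)$ with diameter $d$, a rank assignment is a function $f:V\to\mathbb{R}$; under $f$, the string of a vertex $v$ is the $d$-vector whose $i$-th coordinate is the sum of $f(w)$ over all vertices $w$ with $d(v,w)=i$. The ID-index $IDI(G)$ is the minimum $k$ such that there exists $f:V\to\mathbb{R}$ with $|f(V)|=k$ under which all vertices have distinct strings. *)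

(* Defs.v *)
From HB Require Import structures.
From mathcomp Require Import all_boot all_order all_algebra.
From mathcomp Require Import Rstruct.
From Stdlib Require Rdefinitions.
Set Implicit Arguments. Unset Strict Implicit. Unset Printing Implicit Defensive.
Import Order.TTheory GRing.Theory Num.Theory.
Local Open Scope ring_scope.

Fixpoint walkN (T : finType) (e : rel T) (k : nat) (u v : T) : bool :=
  match k with
  | 0 => u == v
  | k'.+1 => [exists w, e u w && walkN e k' w v]
  end.

(* Graph distance: the least k with a walk of length k from u to v
   (the search over 0 .. #|T|-1 is exhaustive in a connected graph;
   unreachable pairs would get #|T|, which never happens for connected G). *)
Definition gdist (T : finType) (e : rel T) (u v : T) : nat :=
  find (fun k => walkN e k u v) (iota 0 #|T|).

Definition gdiam (T : finType) (e : rel T) : nat :=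
  (\max_(u : T) \max_(v : T) gdist e u v)%N.

Definition vstring (T : finType) (e : rel T) (f : T -> Rdefinitions.R) (v : T) : seq Rdefinitions.R :=
  [seq \sum_(w : T | gdist e v w == i.+1) f w | i <- iota 0 (gdiam e)].

Definition nvalues (T : finType) (f : T -> Rdefinitions.R) : nat :=
  size (undup [seq f v | v <- enum T]).

Definition distinguishing (T : finType) (e : rel T) (f : T -> Rdefinitions.R) : Prop :=
  injective (vstring e f).

Definition is_IDI (T : finType) (e : rel T) (k : nat) : Prop :=
  (exists f : T -> Rdefinitions.R, distinguishing e f /\ nvalues f = k) /\
  (forall f : T -> Rdefinitions.R, distinguishing e f -> (k <= nvalues f)%N).

(* The caterpillar with spine s_0,...,s_{n-1} (0-indexed) and Ls i leaves
   attached to s_i.  Vertices: inl i = spine vertex s_i, inr (Tagged i j) =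
   the j-th leaf attached to s_i. *)
Definition cat_vertex (n : nat) (Ls : nat -> nat) : finType :=
  ('I_n + {i : 'I_n & 'I_(Ls i)})%type.

Definition cat_adj (n : nat) (Ls : nat -> nat) : rel (cat_vertex n Ls) :=
  fun x y =>
    match x, y with
    | inl i, inl j => (i.+1 == j :> nat) || (j.+1 == i :> nat)
    | inl i, inr l => tag l == i
    | inr l, inl i => tag l == i
    | inr _, inr _ => false
    end.

(* Main.v *)
Require Import Defs.
From mathcomp Require Import all_boot all_order all_algebra.
From mathcomp Require Import Rstruct zify ring lra.
From Stdlib Require Rdefinitions.
Set Implicit Arguments. Unset Strict Implicit. Unset Printing Implicit Defensive.
Import Order.TTheory GRing.Theory Num.Theory.

Lemma find_iota_eq (P : pred nat) m s k : (s <= k < s + m)%N -> P k ->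
  (forall j, (s <= j < k)%N -> ~~ P j) -> find P (iota s m) = (k - s)%N.
Proof.
elim: m s => [|m IH] s /= Hk Pk Hlt; first by lia.
case: (ltngtP s k) => Hs.
- have -> : P s = false by apply/negbTE/Hlt; lia.
  rewrite IH //; [lia | by lia | move=> j Hj; apply: Hlt; lia].
- by lia.
- by subst; rewrite Pk subnn.
Qed.

Section Generic.
Local Open Scope ring_scope.
Variable T : finType.
Variable e : rel T.
Variable f : T -> Rdefinitions.R.

Lemma gdist_le_diam x w : (gdist e x w <= gdiam e)%N.
Proof.
rewrite /gdiam.
have H1 := @leq_bigmax _ (fun v => gdist e x v) w.
have H2 := @leq_bigmax _ (fun u => (\max_v gdist e u v)%N) x.
exact: leq_trans H1 H2.
Qed.

Lemma moment_vstring x (g : nat -> Rdefinitions.R) : g 0%N = 0 ->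
  \sum_w g (gdist e x w) * f w =
  \sum_(i < gdiam e) g i.+1 * nth 0 (vstring e f x) i.
Proof.
move=> g0.
set N := gdiam e.
have step1 : \sum_w g (gdist e x w) * f w =
   \sum_w \sum_(k < N.+1) (if gdist e x w == k then g k * f w else 0).
  apply: eq_bigr => w _.
  have Hl : (gdist e x w < N.+1)%N by rewrite ltnS gdist_le_diam.
  rewrite -big_mkcond /= (big_pred1 (Ordinal Hl)) //.
rewrite step1 exchange_big big_ord_recl /=.
rewrite big1; last by move=> w _; case: ifP => _ //; rewrite g0 mul0r.
rewrite add0r; apply: eq_bigr => i _.
rewrite /vstring (nth_map 0%N); last by rewrite size_iota.
rewrite nth_iota // add0n -big_mkcond /= mulr_sumr.
by [].
Qed.

Lemma moment_eq u v (g : nat -> Rdefinitions.R) : g 0%N = 0 ->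
  vstring e f u = vstring e f v ->
  \sum_w g (gdist e u w) * f w = \sum_w g (gdist e v w) * f w.
Proof. by move=> g0 H; rewrite !moment_vstring // H. Qed.

Lemma iso_vstring (s : T -> T) x : injective s ->
  (forall a b, gdist e (s a) (s b) = gdist e a b) ->
  (forall a, f (s a) = f a) ->
  vstring e f (s x) = vstring e f x.
Proof.
move=> inj Hd Hf; rewrite /vstring; apply: eq_map => i.
rewrite (reindex_inj inj); apply: eq_big => w; first by rewrite Hd.
by rewrite Hf.
Qed.
End Generic.

Section Cat.
Variable n : nat.
Variable Ls : nat -> nat.
Local Notation T := (cat_vertex n Ls).
Local Notation e := (@cat_adj n Ls).

Definition sp (i : 'I_n) : T := inl i.
Definition lf (i : 'I_n) (j : 'I_(Ls i)) : T := inr (Tagged (fun k : 'I_n => 'I_(Ls k)) j).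

Definition pos (x : T) : nat := match x with inl i => val i | inr l => val (tag l) end.
Definition dep (x : T) : nat := match x with inl _ => 0%N | inr _ => 1%N end.
Definition dd (x y : T) : nat :=
  if x == y then 0%N else ((pos x - pos y) + (pos y - pos x) + dep x + dep y)%N.

Lemma pos_lt x : (pos x < n)%N.
Proof. by case: x => [i|[i j]] /=. Qed.

Lemma dep_le x : (dep x <= 1)%N.
Proof. by case: x. Qed.

Lemma spine_eq x y : pos x = pos y -> dep x = 0%N -> dep y = 0%N -> x = y.
Proof.
case: x => [i|l] //; case: y => [k|l'] //= H _ _.
by congr inl; apply: val_inj.
Qed.

Lemma dd_neq x y : x != y ->
  dd x y = ((pos x - pos y) + (pos y - pos x) + dep x + dep y)%N.
Proof. by rewrite /dd => /negbTE ->. Qed.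

Lemma dd_xx x : dd x x = 0%N.
Proof. by rewrite /dd eqxx. Qed.

Lemma dd_eq0 x y : (dd x y == 0%N) = (x == y).
Proof.
case: (eqVneq x y) => [->|Hxy]; first by rewrite dd_xx.
rewrite dd_neq //; apply/eqP => H.
have Hp : pos x = pos y by lia.
move/eqP: Hxy; apply; apply: spine_eq => //; lia.
Qed.

Lemma ddC x y : dd x y = dd y x.
Proof.
rewrite /dd eq_sym; case: ifP => // _; lia.
Qed.

Lemma dd_tri x y z : (dd x z <= dd x y + dd y z)%N.
Proof.
case: (eqVneq x y) => [->|Hxy]; first by rewrite dd_xx.
case: (eqVneq y z) => [->|Hyz]; first by rewrite dd_xx addn0.
case: (eqVneq x z) => [->|Hxz]; first by rewrite dd_xx.
rewrite !dd_neq //; lia.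
Qed.

Lemma adjE x y : e x y = (dd x y == 1%N).
Proof.
case: (eqVneq x y) => [->|Hxy].
  by rewrite dd_xx; case: y => [i|l] //=; rewrite /cat_adj; lia.
rewrite dd_neq //.
move: Hxy; case: x => [i|[i j]]; case: y => [k|[k l]] //= Hxy.
- apply/idP/idP; first by lia.
  move=> H; have Hne : (val i != val k) by rewrite val_eqE.
  apply/orP; case: (ltngtP i k) => Hc; [left|right|]; lia.
- by rewrite -val_eqE /=; apply/idP/idP; lia.
- by rewrite -val_eqE /=; apply/idP/idP; lia.
- apply/esym/negbTE; rewrite addn1 addnS eqSS.
  apply/negP => /eqP H.
  have Hik : i = k by apply: val_inj; lia.
  subst k.
  have : j = l by apply: val_inj; lia.
  by move=> Hjl; subst l; rewrite eqxx in Hxy.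
Qed.

Lemma sp_neq (i k : 'I_n) : val i != val k -> (inl i : T) != inl k.
Proof. by move=> H; apply/eqP => -[] /(congr1 val) /eqP; rewrite (negbTE H). Qed.

Lemma dd_step x y : x != y -> exists w, e x w /\ dd x y = (dd w y).+1.
Proof.
case: x => [i | [i j]] Hxy; last first.
  exists (inl i); split; first by rewrite /= eqxx.
  case: (eqVneq (inl i : T) y) => [<-|Hy].
    rewrite dd_xx dd_neq //=; lia.
  rewrite !dd_neq //=; lia.
case: (ltngtP (pos y) i) => Hp.
- have Hi : (i.-1 < n)%N by have := ltn_ord i; lia.
  have Hne : (inl i : T) != inl (Ordinal Hi) by apply: sp_neq => /=; lia.
  exists (inl (Ordinal Hi)); split.
    by rewrite adjE dd_neq //=; lia.
  case: (eqVneq (inl (Ordinal Hi) : T) y) => [<-|Hy].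
    by rewrite dd_xx dd_neq //=; lia.
  rewrite !dd_neq //=; lia.
- have Hi : (i.+1 < n)%N by have := pos_lt y; lia.
  have Hne : (inl i : T) != inl (Ordinal Hi) by apply: sp_neq => /=; lia.
  exists (inl (Ordinal Hi)); split.
    by rewrite adjE dd_neq //=; lia.
  case: (eqVneq (inl (Ordinal Hi) : T) y) => [<-|Hy].
    by rewrite dd_xx dd_neq //=; lia.
  rewrite !dd_neq //=; lia.
- have Hd : dep y = 1%N.
    case Ed: (dep y) => [|[|m]] //; last by have := dep_le y; lia.
    by exfalso; move/eqP: Hxy; apply; apply: spine_eq.
  exists y; split; first by rewrite adjE dd_neq //=; lia.
  by rewrite dd_xx dd_neq //=; lia.
Qed.

Lemma walk_dd k x y : walkN e k x y -> (dd x y <= k)%N.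
Proof.
elim: k x => [|k IH] x /=; first by move/eqP ->; rewrite dd_xx.
case/existsP => w /andP [Hxw Hw].
have := IH _ Hw; have := dd_tri x w y; rewrite adjE in Hxw; move/eqP: Hxw; lia.
Qed.

Lemma dd_walk k x y : dd x y = k -> walkN e k x y.
Proof.
elim: k x => [|k IH] x /=; first by move/eqP; rewrite dd_eq0.
move=> Hk.
have Hxy : x != y by rewrite -dd_eq0 Hk.
have [w [Hxw Hw]] := dd_step Hxy.
apply/existsP; exists w; rewrite Hxw /=; apply: IH; lia.
Qed.

Lemma dd_lt_card x y : (dd x y < #|T|)%N.
Proof.
rewrite card_sum card_ord.
case: (eqVneq x y) => [->|Hxy]; first by rewrite dd_xx; have := pos_lt y; lia.
rewrite dd_neq //.
have := pos_lt x; have := pos_lt y.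
move: Hxy; case: x => [i|l]; case: y => [k|l'] /= Hxy.
- lia.
- have : (0 < #|{: {i : 'I_n & 'I_(Ls i)}}|)%N by apply/card_gt0P; exists l'.
  lia.
- have : (0 < #|{: {i : 'I_n & 'I_(Ls i)}}|)%N by apply/card_gt0P; exists l.
  lia.
- have : (1 < #|{: {i : 'I_n & 'I_(Ls i)}}|)%N.
    apply/card_gt1P; exists l, l'; split => //.
  lia.
Qed.

Lemma gdistE x y : gdist e x y = dd x y.
Proof.
rewrite /gdist (find_iota_eq (k := dd x y)) ?subn0 //.
- by rewrite add0n dd_lt_card.
- exact: dd_walk.
- move=> j /andP [_ Hj]; apply/negP => /walk_dd; lia.
Qed.
End Cat.

Section Main.
Local Open Scope ring_scope.
Local Notation RR := Rdefinitions.R.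
Variable n : nat.
Variable Ls : nat -> nat.
Hypothesis hn : (1 <= n)%N.
Hypothesis hL1 : (1 <= Ls 0)%N.
Hypothesis hLn : (1 <= Ls n.-1)%N.
Hypothesis hsym : forall j : nat, (j < n)%N -> Ls j = Ls (n.-1 - j)%N.
Local Notation T := (cat_vertex n Ls).
Local Notation e := (@cat_adj n Ls).
Local Notation pos := (@pos n Ls).
Local Notation dep := (@dep n Ls).
Local Notation dd := (@dd n Ls).

Lemma hsymo (i : 'I_n) : Ls i = Ls (rev_ord i).
Proof. rewrite hsym //=; congr Ls; have := ltn_ord i; lia. Qed.

Definition mu (x : T) : T := match x with
  | inl i => inl (rev_ord i)
  | inr l => inr (Tagged (fun k : 'I_n => 'I_(Ls k)) (cast_ord (hsymo (tag l)) (tagged l)))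
  end.

Definition lidx (x : T) : nat := match x with inl _ => 0%N | inr l => val (tagged l) end.

Lemma pos_mu x : pos (mu x) = (n.-1 - pos x)%N.
Proof. by case: x => [i|[i j]] /=; have := ltn_ord i; lia. Qed.

Lemma dep_mu x : dep (mu x) = dep x.
Proof. by case: x. Qed.

Lemma mu_inj : injective mu.
Proof.
move=> [i|[i j]] [k|[k l]] //= H.
- case: H => H; congr inl; apply: ord_inj; have := ltn_ord i; have := ltn_ord k; lia.
- have Ht := congr1 pos H.
  have Hv := congr1 lidx H.
  simpl in Ht, Hv.
  have Hik : i = k by apply: ord_inj; have := ltn_ord i; have := ltn_ord k; lia.
  subst k; have -> : j = l by apply: val_inj.
  by [].
Qed.

Lemma dd_mu a b : dd (mu a) (mu b) = dd a b.
Proof.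
case: (eqVneq a b) => [->|Hab]; first by rewrite !dd_xx.
have Hm : mu a != mu b by apply: contra_neq Hab => /mu_inj.
rewrite !dd_neq // !pos_mu !dep_mu.
have := pos_lt a; have := pos_lt b; lia.
Qed.

Lemma gdist_mu a b : gdist e (mu a) (mu b) = gdist e a b.
Proof. by rewrite !gdistE dd_mu. Qed.

Definition swap (x y w : T) : T := if w == x then y else if w == y then x else w.

Lemma swapK x y : involutive (swap x y).
Proof.
move=> w; rewrite /swap.
case: (eqVneq w x) => [->|Hwx]; first by rewrite eqxx; case: eqVneq.
case: (eqVneq w y) => [->|Hwy]; first by rewrite eqxx.
by rewrite (negbTE Hwx) (negbTE Hwy).
Qed.

Lemma swap_x x y : swap x y x = y.
Proof. by rewrite /swap eqxx. Qed.
Lemma swap_y x y : x != y -> swap x y y = x.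
Proof. by move=> H; rewrite /swap eq_sym (negbTE H) eqxx. Qed.
Lemma swap_o x y w : w != x -> w != y -> swap x y w = w.
Proof. by move=> H1 H2; rewrite /swap (negbTE H1) (negbTE H2). Qed.

Lemma dd_swap x y a b : x != y ->
  (forall w, w != x -> w != y -> dd x w = dd y w) ->
  dd (swap x y a) (swap x y b) = dd a b.
Proof.
move=> Hxy Ht.
case: (eqVneq a x) => [->|Hax].
  rewrite swap_x; case: (eqVneq b x) => [->|Hbx]; first by rewrite swap_x !dd_xx.
  case: (eqVneq b y) => [->|Hby]; first by rewrite swap_y // ddC.
  by rewrite swap_o // Ht.
case: (eqVneq a y) => [->|Hay].
  rewrite swap_y //; case: (eqVneq b x) => [->|Hbx]; first by rewrite swap_x ddC.
  case: (eqVneq b y) => [->|Hby]; first by rewrite swap_y // !dd_xx.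
  by rewrite swap_o // Ht.
rewrite (swap_o Hax Hay).
case: (eqVneq b x) => [->|Hbx]; first by rewrite swap_x (ddC a y) -Ht // ddC.
case: (eqVneq b y) => [->|Hby]; first by rewrite swap_y // (ddC a x) Ht // ddC.
by rewrite swap_o.
Qed.


Definition Lmax := (\max_(i < n) Ls i)%N.
Definition Kv := if (2 <= Lmax)%N then Lmax else 2%N.

Lemma Ls_le (i : 'I_n) : (Ls i <= Lmax)%N.
Proof. exact: (@leq_bigmax _ (fun i : 'I_n => Ls i) i). Qed.

Lemma istar : exists i : 'I_n, Ls i = Lmax.
Proof.
have H : (0 < #|'I_n|)%N by rewrite card_ord.
have [i Hi] := @bigop.eq_bigmax _ (fun i : 'I_n => Ls i) H.
by exists i; rewrite /Lmax Hi.
Qed.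

Definition o0 : 'I_n := Ordinal hn.

Lemma L_ge1 : (1 <= Lmax)%N.
Proof. exact: leq_trans hL1 (Ls_le o0). Qed.

Lemma K_ge2 : (2 <= Kv)%N.
Proof. by rewrite /Kv; case: ifP. Qed.

Lemma L_le_K : (Lmax <= Kv)%N.
Proof. by rewrite /Kv; case: ifP => // /negbT; lia. Qed.

Lemma nval_ge (f : T -> RR) (s : seq RR) : uniq s ->
  {subset s <= [seq f v | v <- enum T]} -> (size s <= nvalues f)%N.
Proof.
move=> Hu Hs; rewrite /nvalues; apply: uniq_leq_size => // x Hx.
by rewrite mem_undup; apply: Hs.
Qed.

Lemma twin_vstring (f : T -> RR) x y : x != y ->
  (forall w, w != x -> w != y -> dd x w = dd y w) -> f x = f y ->
  vstring e f x = vstring e f y.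
Proof.
move=> Hxy Ht Hf.
have <- : swap x y x = y by rewrite swap_x.
apply/esym; apply: iso_vstring.
- exact: can_inj (swapK x y).
- by move=> a b; rewrite !gdistE dd_swap.
- move=> a; case: (eqVneq a x) => [->|Hax]; first by rewrite swap_x.
  case: (eqVneq a y) => [->|Hay]; first by rewrite swap_y.
  by rewrite swap_o.
Qed.

Lemma lower_L (f : T -> RR) : distinguishing e f -> (Lmax <= nvalues f)%N.
Proof.
move=> Hd.
have [i Hi] := istar.
pose g := fun j : 'I_(Ls i) => f (inr (Tagged (fun k : 'I_n => 'I_(Ls k)) j)).
have ginj : injective g.
  move=> j j' Hg.
  case: (eqVneq j j') => // Hne.
  have Hx : (inr (Tagged (fun k : 'I_n => 'I_(Ls k)) j) : T) !=
            inr (Tagged (fun k : 'I_n => 'I_(Ls k)) j').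
    apply/eqP => H; have /= := congr1 lidx H; move/ord_inj => H'.
    by move: Hne; rewrite H' eqxx.
  have Ht : forall w, w != inr (Tagged (fun k : 'I_n => 'I_(Ls k)) j) ->
      w != inr (Tagged (fun k : 'I_n => 'I_(Ls k)) j') ->
      dd (inr (Tagged (fun k : 'I_n => 'I_(Ls k)) j)) w =
      dd (inr (Tagged (fun k : 'I_n => 'I_(Ls k)) j')) w.
    by move=> w Hw1 Hw2; rewrite !dd_neq 1?eq_sym.
  have := Hd _ _ (twin_vstring Hx Ht Hg).
  by move=> H; move: Hx; rewrite H eqxx.
have := @nval_ge f [seq g j | j <- enum 'I_(Ls i)].
rewrite size_map size_enum_ord => H; rewrite -Hi; apply: H.
  by rewrite map_inj_uniq ?enum_uniq.
move=> v /mapP [j _ ->]; apply: map_f; exact: mem_enum.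
Qed.

Lemma lower_2 (f : T -> RR) : distinguishing e f -> (2 <= nvalues f)%N.
Proof.
move=> Hd.
case: (leqP 2 Lmax) => HL; first by apply: leq_trans HL (lower_L Hd).
pose x : T := inl o0.
case: (boolP [exists w, f w != f x]) => [/existsP [w Hw]|].
  have := @nval_ge f [:: f x; f w].
  rewrite /=; apply; first by rewrite inE eq_sym Hw.
  move=> v; rewrite !inE => /orP [] /eqP ->; apply: map_f; exact: mem_enum.
rewrite negb_exists => /forallP Hc.
have Hc' : forall w, f w = f x by move=> w; apply/eqP; have := Hc w; rewrite negbK.
case: (ltnP 1 n) => Hn.
  have Hmx : mu x != x.
    apply/eqP => H; have /= := congr1 pos H; lia.
  have := Hd _ _ (iso_vstring x mu_inj gdist_mu (fun a => etrans (Hc' _) (esym (Hc' _)))).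
  by move=> H; rewrite H eqxx in Hmx.
have Hn1 : n = 1%N by lia.
have H0 : (0 < Ls o0)%N by [].
pose y : T := inr (Tagged (fun k : 'I_n => 'I_(Ls k)) (Ordinal H0)).
have Hxy : x != y by [].
suff Ht : forall w, w != x -> w != y -> dd x w = dd y w.
  have := Hd _ _ (twin_vstring Hxy Ht (esym (Hc' y))).
  by move=> H; move: Hxy; rewrite H eqxx.
move=> w Hw1 Hw2; exfalso.
move: Hw1 Hw2; case: w => [k|[a b]].
  move=> H _; move: H; rewrite /x. move=> /eqP H; apply: H; congr inl; apply: ord_inj => /=; have := ltn_ord k; lia.
move=> _ /eqP; apply.
have Ha : a = o0 by apply: ord_inj; have := ltn_ord a; rewrite /= ; lia.
subst a; rewrite /y; congr inr; congr existT.
have h1 := ltn_ord b; have h2 := Ls_le o0; apply: ord_inj; simpl in *; lia.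
Qed.

Lemma lower_K (f : T -> RR) : distinguishing e f -> (Kv <= nvalues f)%N.
Proof.
move=> Hd; rewrite /Kv; case: ifP => _; [exact: lower_L | exact: lower_2].
Qed.

Definition cval (j : nat) : RR := (Kv + j)%:R.
Definition fc (x : T) : RR := match x with
  | inl i => if nat_of_ord i == 0%N then cval 1 else cval 0
  | inr l => cval (nat_of_ord (tagged l)) end.
Definition M (x : T) (h : nat -> RR) := \sum_(w : T) h (dd x w) * fc w.

Lemma cval_inj j j' : cval j = cval j' -> j = j'.
Proof. by move/eqP; rewrite /cval eqr_nat => /eqP; lia. Qed.

Lemma fc_ge x : (Kv%:R : RR) <= fc x.
Proof.
rewrite /fc /cval; case: x => [i|l]; first case: ifP => _.
all: by rewrite ler_nat leq_addr.
Qed.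

Lemma fc_gt0 x : 0 < fc x.
Proof.
apply: lt_le_trans (fc_ge x); rewrite ltr0n; have := K_ge2; lia.
Qed.

Lemma fc_sp i : fc (inl i) <= (Kv + 1)%:R.
Proof. rewrite /fc /cval; case: ifP => _; rewrite ler_nat; lia. Qed.

Lemma M_split x h : M x h = h 0%N * fc x + \sum_(w | w != x) h (dd x w) * fc w.
Proof. by rewrite /M (bigD1 x) //= dd_xx. Qed.

Lemma M_gdist x g : M x g = \sum_w g (gdist e x w) * fc w.
Proof. by apply: eq_bigr => w _; rewrite gdistE. Qed.

Lemma str_M u v g : vstring e fc u = vstring e fc v -> g 0%N = 0 -> M u g = M v g.
Proof. by move=> H g0; rewrite !M_gdist; apply: moment_eq. Qed.

Lemma M_f x : M x (fun d => (d != 0%N)%:R) = \sum_w fc w - fc x.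
Proof.
rewrite M_split [in RHS](bigD1 x) //=.
rewrite (addrC (fc x)) addrK mul0r add0r.
by apply: eq_bigr => w Hw; rewrite dd_eq0 eq_sym Hw mul1r.
Qed.

Lemma f_eq u v : vstring e fc u = vstring e fc v -> fc u = fc v.
Proof.
move=> H.
have g0 : ((0%N != 0%N)%:R : RR) = 0 by [].
have := str_M (g := fun d => (d != 0%N)%:R) H g0.
rewrite !M_f => H'; lra.
Qed.

Lemma M_shift x h : M x h = h 0%N * fc x + M x (fun d => if d == 0%N then 0 else h d).
Proof.
rewrite !M_split /= mul0r add0r; congr (_ + _); apply: eq_bigr => w Hw.
by rewrite dd_eq0 eq_sym (negbTE Hw).
Qed.

Lemma spine_full (i k : 'I_n) :
  vstring e fc (inl i) = vstring e fc (inl k) ->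
  forall h, M (inl i) h = M (inl k) h.
Proof.
move=> H h; rewrite M_shift [RHS]M_shift (f_eq H); congr (_ + _).
exact: str_M.
Qed.

Lemma dd_leaf l w : w != inr l -> dd (inr l) w = (dd (inl (tag l)) w).+1.
Proof.
move=> Hw; case: (eqVneq w (inl (tag l))) => [->|Hw'].
  by rewrite dd_xx dd_neq //=; lia.
rewrite !dd_neq 1?eq_sym //=; lia.
Qed.

Lemma leaf_M l g : g 0%N = 0 ->
  M (inr l) g = M (inl (tag l)) (fun d => g d.+1) - g 2%N * fc (inr l).
Proof.
move=> g0; rewrite M_split /M [in RHS](bigD1 (inr l)) //= g0 mul0r add0r.
have -> : dd (inl (tag l)) (inr l) = 1%N by rewrite dd_neq //=; lia.
rewrite [X in X - _]addrC addrK; apply: eq_bigr => w Hw; by rewrite dd_leaf.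
Qed.

Lemma leaf_full l l' :
  vstring e fc (inr l) = vstring e fc (inr l') ->
  forall h, M (inl (tag l)) h = M (inl (tag l')) h.
Proof.
move=> H h.
pose g d := if d is d'.+1 then h d' else 0.
have := str_M (g := g) H erefl.
rewrite !leaf_M // (f_eq H) => H'.
lra.
Qed.

Lemma sum_two (F : T -> RR) w1 w2 : w1 != w2 -> (forall w, 0 <= F w) ->
  F w1 + F w2 <= \sum_w F w.
Proof.
move=> H12 H0; rewrite (bigD1 w1) //= (bigD1 w2) 1?eq_sym //=.
rewrite addrA lerDl; apply: sumr_ge0 => w _; exact: H0.
Qed.

Lemma sum_pos (F : T -> RR) w0 : (forall w, 0 <= F w) -> 0 < F w0 -> 0 < \sum_w F w.
Proof.
move=> H0 Hp; rewrite (bigD1 w0) //=.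
apply: lt_le_trans Hp _; rewrite lerDl; apply: sumr_ge0 => w _; exact: H0.
Qed.

Lemma M1_leaf l : M (inr l) (fun d => (d == 1%N)%:R) = fc (inl (tag l)).
Proof.
rewrite /M (bigD1 (inl (tag l))) //=.
have -> : dd (inr l) (inl (tag l)) = 1%N by rewrite dd_neq //=; lia.
rewrite mul1r big1 ?addr0 // => w Hw.
case: (eqVneq w (inr l)) => [->|Hw2]; first by rewrite dd_xx mul0r.
by rewrite dd_leaf // eqSS dd_eq0 eq_sym (negbTE Hw) mul0r.
Qed.

Lemma dd_sp (a b : 'I_n) : dd (inl a) (inl b) = ((a - b) + (b - a))%N.
Proof.
case: (eqVneq (inl a : T) (inl b)) => [[->]|H]; first by rewrite dd_xx; lia.
by rewrite dd_neq //= !addn0.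
Qed.

Lemma dd_sl (a : 'I_n) l : dd (inl a) (inr l) = ((a - tag l) + (tag l - a)).+1%N.
Proof. by rewrite dd_neq //=; lia. Qed.

Lemma two_nbrs (i : 'I_n) : (1 < n)%N || (1 < Ls 0)%N ->
  exists w1 w2 : T, [/\ w1 != w2, dd (inl i) w1 = 1%N & dd (inl i) w2 = 1%N].
Proof.
move=> Hc.
have Hi := ltn_ord i.
have Hm : (i - 1 < n)%N by lia.
have Hp : (0 < i)%N -> (i.+1 < n)%N -> False -> False by [].
case: (ltnP 0 i) => Hi0; case: (ltnP i.+1 n) => Hin.
- exists (inl (Ordinal Hm)), (inl (Ordinal Hin)); split.
  + by apply: sp_neq => /=; lia.
  + by rewrite dd_sp /=; lia.
  + by rewrite dd_sp /=; lia.
- have Hil : nat_of_ord i = n.-1 by lia.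
  have H0 : (0 < Ls i)%N by rewrite Hil.
  exists (inl (Ordinal Hm)), (inr (Tagged (fun k : 'I_n => 'I_(Ls k)) (Ordinal H0))); split => //.
  + by rewrite dd_sp /=; lia.
  + by rewrite dd_sl /=; lia.
- have Hi0' : nat_of_ord i = 0%N by lia.
  have H0 : (0 < Ls i)%N by rewrite Hi0'.
  exists (inl (Ordinal Hin)), (inr (Tagged (fun k : 'I_n => 'I_(Ls k)) (Ordinal H0))); split => //.
  + by rewrite dd_sp /=; lia.
  + by rewrite dd_sl /=; lia.
- have Hi0' : nat_of_ord i = 0%N by lia.
  have H1 : (1 < Ls i)%N by rewrite Hi0'; move: Hc; case/orP => //; lia.
  have H0 : (0 < Ls i)%N by lia.
  exists (inr (Tagged (fun k : 'I_n => 'I_(Ls k)) (Ordinal H0))),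
         (inr (Tagged (fun k : 'I_n => 'I_(Ls k)) (Ordinal H1))); split.
  + by apply/eqP => H; have /= := congr1 lidx H.
  + by rewrite dd_sl /=; lia.
  + by rewrite dd_sl /=; lia.
Qed.

Lemma spine_leaf i l : vstring e fc (inl i) = vstring e fc (inr l) -> False.
Proof.
move=> H.
have Hf := f_eq H.
have g0 : (((0%N == 1%N) : nat)%:R : RR) = 0 by [].
have := str_M (g := fun d => (d == 1%N)%:R) H g0.
rewrite M1_leaf => HM.
have Hsp := fc_sp (tag l).
have K2 := K_ge2.
case: (boolP ((1 < n)%N || (1 < Ls 0)%N)) => Hc.
  have [w1 [w2 [H12 H1 H2]]] := two_nbrs i Hc.
  have Hle : fc w1 + fc w2 <= M (inl i) (fun d => (d == 1%N)%:R).
    rewrite /M; have := @sum_two (fun w => (dd (inl i) w == 1%N)%:R * fc w) w1 w2 H12.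
    rewrite /= H1 H2 !eqxx !mul1r; apply => w.
    apply: mulr_ge0; [exact: ler0n | exact: ltW (fc_gt0 w)].
  rewrite HM in Hle.
  have := fc_ge w1; have := fc_ge w2.
  have : (Kv + 1)%:R < (Kv%:R + Kv%:R : RR) by rewrite -natrD ltr_nat; lia.
  lra.
have Hn1 : n = 1%N by move: Hc; rewrite negb_or; have := ltn_ord i; lia.
have HL0 : Ls 0 = 1%N by move: Hc; rewrite negb_or; lia.
have Hi0 : nat_of_ord i = 0%N by have := ltn_ord i; lia.
have Ht0 : nat_of_ord (tag l) = 0%N by have := ltn_ord (tag l); lia.
have HLt : Ls (tag l) = 1%N by rewrite Ht0.
have Hj : nat_of_ord (tagged l) = 0%N by have := ltn_ord (tagged l); lia.
move: Hf; rewrite /fc Hi0 Hj eqxx => /cval_inj.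
by [].
Qed.

Definition E (a : nat) : nat := (maxn a (n.-1 - a)).+1.

Lemma ecc_bound (k : 'I_n) w : (dd (inl k) w <= E k)%N.
Proof.
rewrite /E; case: (eqVneq (inl k : T) w) => [<-|H]; first by rewrite dd_xx.
rewrite dd_neq //=; have := pos_lt w; have := dep_le w; have := ltn_ord k; lia.
Qed.

Lemma hnp : (n.-1 < n)%N. Proof. by case: n hn. Qed.
Definition olast : 'I_n := Ordinal hnp.

Lemma ecc_far (i : 'I_n) : exists w, dd (inl i) w = E i.
Proof.
have Hi := ltn_ord i.
case: (leqP i (n.-1 - i)) => H.
  have H0 : (0 < Ls olast)%N by [].
  exists (inr (Tagged (fun k : 'I_n => 'I_(Ls k)) (Ordinal H0))).
  by rewrite dd_sl /E /=; lia.
have H0 : (0 < Ls o0)%N by [].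
exists (inr (Tagged (fun k : 'I_n => 'I_(Ls k)) (Ordinal H0))).
by rewrite dd_sl /E /=; lia.
Qed.

Lemma M_nonneg x (h : nat -> RR) : (forall d, 0 <= h d) -> forall w, 0 <= h (dd x w) * fc w.
Proof. by move=> Hh w; apply: mulr_ge0 => //; exact: ltW (fc_gt0 w). Qed.

Lemma ecc_le (a b : 'I_n) : (forall h, M (inl a) h = M (inl b) h) -> (E a <= E b)%N.
Proof.
move=> H; rewrite leqNgt; apply/negP => Hlt.
have [w Hw] := ecc_far a.
pose h d : RR := (d == E a)%:R.
have Hp : 0 < M (inl a) h.
  apply: (@sum_pos _ w); first by apply: M_nonneg => d; exact: ler0n.
  by rewrite /h Hw eqxx mul1r fc_gt0.
have Hz : M (inl b) h = 0.
  apply: big1 => w' _; rewrite /h.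
  have := ecc_bound b w'; case: eqP => [->|_]; first lia.
  by rewrite mul0r.
by move: Hp; rewrite H Hz ltxx.
Qed.

Lemma M_mu x h : M (mu x) h = \sum_w h (dd x w) * fc (mu w).
Proof.
rewrite /M (reindex_inj mu_inj); apply: eq_bigr => w _; by rewrite dd_mu.
Qed.

Lemma spine_sep (i k : 'I_n) : (forall h, M (inl i) h = M (inl k) h) -> i = k.
Proof.
move=> H.
case: (eqVneq i k) => // Hik; exfalso.
have E1 := ecc_le H.
have E2 := ecc_le (fun h => esym (H h)).
have Hik' : nat_of_ord i != nat_of_ord k by [].
have Hk : nat_of_ord k = (n.-1 - i)%N.
  move: E1 E2 Hik'; rewrite /E; have := ltn_ord i; have := ltn_ord k; lia.
have Hn2 : (1 < n)%N by have := ltn_ord i; have := ltn_ord k; lia.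
have Hmu : (inl k : T) = mu (inl i).
  by congr inl; apply: ord_inj => /=; have := ltn_ord i; lia.
pose h d : RR := (d == nat_of_ord i)%:R.
have HD : M (inl i) h - M (mu (inl i)) h =
          \sum_w h (dd (inl i) w) * (fc w - fc (mu w)).
  rewrite M_mu /M -sumrB; apply: eq_bigr => w _; by rewrite mulrBr.
have Hne : (inl olast : T) != inl o0 by apply: sp_neq => /=; lia.
rewrite (bigD1 (inl o0)) //= (bigD1 (inl olast)) //= in HD.
rewrite big1 in HD; last first.
  move=> w /andP [Hw1 Hw2].
  case: w Hw1 Hw2 => [m|[a b]] Hw1 Hw2 /=; last by rewrite subrr mulr0.
  have Hm0 : nat_of_ord m != 0%N by apply: contra_neq Hw1 => Hm; congr inl; exact: ord_inj.
  have Hml : nat_of_ord m != n.-1 by apply: contra_neq Hw2 => Hm; congr inl; exact: ord_inj.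
  rewrite (negbTE Hm0).
  have -> : (n - m.+1 == 0)%N = false by apply/negbTE; have := ltn_ord m; lia.
  by rewrite subrr mulr0.
have Hmu' : (inl (rev_ord i) : T) = inl k by rewrite Hmu.
have D0 : dd (inl i) (inl o0) = nat_of_ord i by rewrite dd_sp /=; lia.
have Dl : dd (inl i) (inl olast) = (n.-1 - i)%N.
  by rewrite dd_sp (_ : nat_of_ord olast = n.-1) //; have := ltn_ord i; lia.
have B1 : ((n - 1)%N == 0%N) = false by apply/negbTE; lia.
have B2 : (n.-1 == 0%N) = false by apply/negbTE; lia.
have B3 : ((n - n.-1.+1)%N == 0%N) = true by apply/eqP; lia.
have B4 : ((n.-1 - i)%N == nat_of_ord i) = false by apply/negbTE; lia.
move: HD; rewrite Hmu' -H subrr D0 Dl B1 B2 B3 /h eqxx B4 /= mulr0n mulr1n mul1r mul0r.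
rewrite add0r addr0 /cval => /eqP; rewrite eq_sym subr_eq0 eqr_nat; lia.
Qed.

Lemma fc_dist : distinguishing e fc.
Proof.
move=> u v H.
case: u H => [i|l]; case: v => [k|l'] H.
- by rewrite (spine_sep (spine_full H)).
- by case: (spine_leaf H).
- by case: (spine_leaf (esym H)).
- have Hf := f_eq H.
  have Ht := spine_sep (leaf_full H).
  move: Hf Ht; case: l H => [a b]; case: l' => [a' b'] /= H Hf Ht.
  subst a'; move/cval_inj: Hf => Hb.
  by have -> : b = b' by apply: ord_inj.
Qed.

Lemma fc_nvalues : nvalues fc = Kv.
Proof.
rewrite /nvalues.
have Hp : perm_eq (undup [seq fc v | v <- enum T]) [seq cval j | j <- iota 0 Kv].
  apply: uniq_perm; first exact: undup_uniq.
    by rewrite map_inj_uniq ?iota_uniq //; exact: cval_inj.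
  move=> x; rewrite mem_undup; apply/mapP/mapP.
    case=> w _ ->; case: w => [m|[a b]] /=.
      case: ifP => _; [exists 1%N | exists 0%N] => //; rewrite mem_iota; have := K_ge2; lia.
    exists (nat_of_ord b) => //; rewrite mem_iota; have := ltn_ord b; have := Ls_le a; have := L_le_K; lia.
  case=> j; rewrite mem_iota => Hj ->.
  case: (ltnP j Lmax) => HjL.
    have [i Hi] := istar.
    have Hji : (j < Ls i)%N by rewrite Hi.
    by exists (inr (Tagged (fun k : 'I_n => 'I_(Ls k)) (Ordinal Hji))); rewrite ?mem_enum.
  have Hj1 : j = 1%N.
    move: Hj; rewrite /Kv; have := L_ge1; case: ifP => /=; lia.
  by exists (inl o0); rewrite ?mem_enum //= Hj1.
by rewrite (perm_size Hp) size_map size_iota.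
Qed.
End Main.

Theorem mainTheorem15 (n : nat) (Ls : nat -> nat)
  (hn : (1 <= n)%N)
  (hL1 : (1 <= Ls 0)%N) (hLn : (1 <= Ls n.-1)%N)
  (hsym : forall j : nat, (j < n)%N -> Ls j = Ls (n.-1 - j)%N) :
  let L := (\max_(i < n) Ls i)%N in
  is_IDI (@cat_adj n Ls) (if (2 <= L)%N then L else 2%N).
Proof.
move=> L.
have -> : (if (2 <= L)%N then L else 2%N) = Kv n Ls by [].
split.
- exists (fc (Ls := Ls)); split; [exact: fc_dist hsym | exact: fc_nvalues].
- by move=> f Hf; exact: lower_K hsym f Hf.
Qed.
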